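(* For every $n$-outcome forecast domain $\mathcal{D}$, the quadratic scoring rule $s(\mathbf{p};j)=2p_j-\sum_{k=1}^n p_k^2$ on $\mathcal{D}$ has convex exposure.
   Context: $\Delta^n$ is the standard simplex in $\mathbb{R}^n$; an $n$-outcome forecast domain is a convex $(n-1)$-dimensional subset of $\Delta^n$. For a proper scoring rule $s$ with expected reward function $G(\mathbf{p})=\sum_j p_j s(\mathbf{p};j)$ (here $G(\mathbf{p})=\sum_j p_j^2$), the exposure function is $\mathbf{g}=\nabla G$, with values understood modulo translation by the all-ones vector (equivalently projected onto $\{\mathbf{x}:\sum_i x_i=0\}$). Convex exposure means the range of $\mathbf{g}$ on $\mathcal{D}$ is a convex set. *)

(* Defs.v *)
From HB Require Import structures.
From mathcomp Require Import all_boot all_order all_algebra.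
From mathcomp Require Import all_classical all_reals all_analysis.
Set Implicit Arguments. Unset Strict Implicit. Unset Printing Implicit Defensive.
Import Order.TTheory GRing.Theory Num.Theory.
Local Open Scope classical_set_scope.
Local Open Scope ring_scope.

Definition vec (R : realType) (n : nat) := 'I_n -> R.

Definition simplex (R : realType) (n : nat) : set (vec R n) :=
  [set p | (forall i, 0 <= p i) /\ \sum_(i < n) p i = 1].

Definition convex_set_vec (R : realType) (n : nat) (A : set (vec R n)) : Prop :=
  forall x y : vec R n, A x -> A y -> forall t : R, 0 <= t <= 1 ->
    A (fun i => t * x i + (1 - t) * y i).

Definition aff_indep (R : realType) (n m : nat) (x : 'I_m -> vec R n) : Prop :=
  forall c : 'I_m -> R,
    (forall i, \sum_(k < m) c k * x k i = 0) -> \sum_(k < m) c k = 0 ->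
    forall k, c k = 0.

(* An n-outcome forecast domain: a convex subset of Delta^n of affine
   dimension n-1, i.e. containing n affinely independent points (this is the
   maximal possible affine dimension of a subset of Delta^n). *)
Definition forecast_domain (R : realType) (n : nat) (D : set (vec R n)) : Prop :=
  D `<=` @simplex R n /\ convex_set_vec D /\
  exists x : 'I_n -> vec R n, (forall k, D (x k)) /\ aff_indep x.

(* Scoring rules: s p j = reward of report p when outcome j occurs. *)
Definition scoring_rule (R : realType) (n : nat) := vec R n -> 'I_n -> R.

Definition quadratic_rule (R : realType) (n : nat) : scoring_rule R n :=
  fun p j => 2 * p j - \sum_(k < n) p k ^+ 2.

Definition expected_reward (R : realType) (n : nat) (s : scoring_rule R n)
  (p : vec R n) : R := \sum_(j < n) p j * s p j.

Definition unit_vec (R : realType) (n : nat) (i : 'I_n) : vec R n :=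
  fun k => (k == i)%:R.

Definition gradient (R : realType) (n : nat) (G : vec R n -> R) (p : vec R n)
  : vec R n :=
  fun i => derive1 (fun t : R => G (fun k => p k + t * @unit_vec R n i k)) 0.

Definition proj0 (R : realType) (n : nat) (x : vec R n) : vec R n :=
  fun i => x i - (\sum_(k < n) x k) / n%:R.

(* Exposure function g = grad G, taken modulo the all-ones vector. *)
Definition exposure (R : realType) (n : nat) (s : scoring_rule R n)
  (p : vec R n) : vec R n := proj0 (gradient (expected_reward s) p).

Definition convex_exposure (R : realType) (n : nat) (s : scoring_rule R n)
  (D : set (vec R n)) : Prop :=
  convex_set_vec [set exposure s p | p in D].

(* Main.v *)
Require Import Defs.
From mathcomp Require Import all_boot all_order all_algebra.
From mathcomp Require Import all_classical all_reals all_analysis.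
From mathcomp Require Import ring lra.
Import Order.TTheory GRing.Theory Num.Theory.
Local Open Scope classical_set_scope.
Local Open Scope ring_scope.

Lemma dtest (R : realType) (S a : R) :
  derive1 (fun t : R => (S + 2 * t * a + t ^+ 2) * (1 - t)) 0 = 2 * a - S.
Proof.
rewrite derive1E.
have H : is_derive (0:R) 1 (fun t : R => (S + 2 * t * a + t ^+ 2) * (1 - t)) (2 * a - S).
  apply: is_derive_eq.
  rewrite !(scaler0, expr0n, mulr0, mul0r, addr0, add0r, subr0, mul1r, scale0r) /=.
  change (S * -1 + 1 * (a * (2 * 1)) = 2*a - S); lra.
exact: derive_val.
Qed.

Lemma sum_shift (R : realType) n (r : vec R n) (i : 'I_n) (t : R) :
  \sum_(k < n) (r k + t * @unit_vec R n i k) = \sum_(k < n) r k + t.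
Proof.
rewrite big_split /=; congr (_ + _).
rewrite (bigD1 i) //= big1 ?addr0 /unit_vec ?eqxx ?mulr1 //.
by move=> k /negbTE ->; rewrite mulr0.
Qed.

Lemma sumsq_shift (R : realType) n (r : vec R n) (i : 'I_n) (t : R) :
  \sum_(k < n) (r k + t * @unit_vec R n i k) ^+ 2
  = \sum_(k < n) r k ^+ 2 + 2 * t * r i + t ^+ 2.
Proof.
rewrite (bigD1 i) //= [in RHS](bigD1 i) //= /unit_vec eqxx mulr1.
rewrite (eq_bigr (fun k => r k ^+ 2)); last first.
  by move=> k /negbTE ->; rewrite mulr0 addr0.
ring.
Qed.

Lemma expo (R : realType) n (r : vec R n) : simplex r ->
  exposure (@quadratic_rule R n) r = fun i => 2 * r i - 2 / n%:R.
Proof.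
move=> [_ Hs]; apply/funext => i.
have Hg : forall j, gradient (expected_reward (@quadratic_rule R n)) r j
    = 2 * r j - \sum_(k < n) r k ^+ 2.
  move=> j; rewrite /gradient.
  rewrite -(@dtest R (\sum_(k < n) r k ^+ 2) (r j)); congr derive1.
  apply/funext => t; rewrite /expected_reward /quadratic_rule.
  rewrite sumsq_shift.
  under eq_bigr do rewrite mulrBr mulrA.
  rewrite sumrB -mulr_suml sum_shift Hs.
  under eq_bigr do rewrite (mulrC _ 2) -mulrA -expr2.
  rewrite -mulr_sumr sumsq_shift; ring.
rewrite /exposure /proj0 Hg (eq_bigr _ (fun k _ => Hg k)).

rewrite sumrB -mulr_sumr Hs sumr_const card_ord.
case: n r i Hs Hg => [|m] r i; first by case: i.
move=> _ _.
have hn : (m.+1)%:R != 0 :> R by rewrite pnatr_eq0.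
rewrite -mulr_natr; field; move: hn; rewrite -addn1 natrD addrC. done.
Qed.

Theorem propositionF3 (R : realType) (n : nat) (D : set (vec R n)) :
  forecast_domain D -> convex_exposure (@quadratic_rule R n) D.
Proof.
move=> [sub [cvx _]] x y [p Dp <-] [q Dq <-] t ht.
exists (fun i => t * p i + (1 - t) * q i); first exact: cvx.
rewrite !expo; try exact: sub.
  by apply/funext => i; ring.
exact: sub (cvx _ _ Dp Dq t ht).
Qed.
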